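(* For every $d\ge 1$ there is a constant $C_d$ such that for every $\sigma\in(0,1)$ and every finite $\sigma$-exposed set $L$ of closed line segments in $\mathbb{R}^d$, the density of $L$ is at most $C_d\,\sigma^{-2d-2}$.
   Context: For sets $X, Y\subseteq\mathbb{R}^d$ and $\sigma>0$, $X$ $\sigma$-shadows $Y$ if $\max_{q\in Y} \mathrm{dist}(q, X) \le \sigma\cdot \mathrm{diam}(Y)$, where $\mathrm{dist}(q,X)=\min_{p\in X}\|q-p\|$. A set of objects is $\sigma$-exposed if no object in the set $\sigma$-shadows another (distinct) object of the set. The density of a finite set $\mathcal{O}$ of objects in $\mathbb{R}^d$ is the maximum, over all closed balls $B$, of the number of objects $o\in\mathcal{O}$ that intersect $B$ and satisfy $\mathrm{diam}(o)\ge \mathrm{diam}(B)$. *)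

(* Defs.v *)
From Stdlib Require Import Reals List ClassicalEpsilon.
From mathcomp Require Import ssreflect ssrfun ssrbool eqtype ssrnat seq fintype bigop.
Open Scope R_scope.

Definition pt (d : nat) := 'I_d -> R.

Definition edist {d : nat} (x y : pt d) : R :=
  sqrt (\big[Rplus/0]_(i < d) Rsqr (x i - y i)).

Definition seg {d : nat} (a b : pt d) : pt d -> Prop :=
  fun p => exists t, 0 <= t <= 1 /\ forall i, p i = (1 - t) * a i + t * b i.

Definition is_segment {d : nat} (S : pt d -> Prop) : Prop :=
  exists a b : pt d, (exists i, a i <> b i) /\ forall p, S p <-> seg a b p.

(* supremum of a set of reals (0 if it has no least upper bound) *)
Definition Rsup (E : R -> Prop) : R := epsilon (inhabits 0) (fun m => is_lub E m).

Definition diam {d : nat} (S : pt d -> Prop) : R :=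
  Rsup (fun x => exists p q, S p /\ S q /\ x = edist p q).

(* X sigma-shadows Y: max_{q in Y} dist(q,X) <= sigma diam(Y).
   For compact X (all objects here) dist(q,X) is attained, so this says
   every q in Y has some p in X with |q-p| <= sigma diam(Y). *)
Definition shadows {d : nat} (sigma : R) (X Y : pt d -> Prop) : Prop :=
  forall q, Y q -> exists p, X p /\ edist q p <= sigma * diam Y.

Definition exposed {d : nat} (sigma : R) (L : list (pt d -> Prop)) : Prop :=
  forall i j, (i < List.length L)%coq_nat -> (j < List.length L)%coq_nat -> i <> j ->
    ~ shadows sigma (List.nth i L (fun _ => False)) (List.nth j L (fun _ => False)).

Definition closed_ball {d : nat} (c : pt d) (r : R) : pt d -> Prop :=
  fun p => edist p c <= r.

Definition density_le {d : nat} (L : list (pt d -> Prop)) (k : R) : Prop :=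
  forall (c : pt d) (r : R), 0 < r ->
  forall I : list nat, NoDup I ->
    (forall i, In i I ->
       (i < List.length L)%coq_nat /\
       (exists p, List.nth i L (fun _ => False) p /\ closed_ball c r p) /\
       diam (closed_ball c r) <= diam (List.nth i L (fun _ => False))) ->
    INR (List.length I) <= k.

(* Main.v *)
Require Import Defs.
From Stdlib Require Import Reals List.
From mathcomp Require Import ssreflect ssrnat fintype.
From Stdlib Require Import Reals List Lra Lia ZArith Rgeom ClassicalEpsilon.
From mathcomp Require Import ssreflect ssrfun ssrbool eqtype ssrnat seq fintype bigop.
Open Scope R_scope.

Lemma ss_ge0 (T : Type) (r : seq T) (F : T -> R) :
  (forall i, 0 <= F i) -> 0 <= \big[Rplus/0]_(i <- r) F i.
Proof.
move=> H; elim: r => [|x r IH]; first by rewrite big_nil; lra.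
rewrite big_cons; have := H x; lra.
Qed.

Lemma ss_le (T : Type) (r : seq T) (F G : T -> R) :
  (forall i, F i <= G i) -> \big[Rplus/0]_(i <- r) F i <= \big[Rplus/0]_(i <- r) G i.
Proof.
move=> H; elim: r => [|x r IH]; first by rewrite !big_nil; lra.
rewrite !big_cons; have := H x; lra.
Qed.

Lemma ss_scale (T : Type) (r : seq T) (F : T -> R) c :
  \big[Rplus/0]_(i <- r) (c * F i) = c * \big[Rplus/0]_(i <- r) F i.
Proof.
elim: r => [|x r IH]; first by rewrite !big_nil; ring.
rewrite !big_cons IH; ring.
Qed.

Lemma ss_term (T : eqType) (r : seq T) (F : T -> R) i :
  (forall i, 0 <= F i) -> i \in r -> F i <= \big[Rplus/0]_(i <- r) F i.
Proof.
move=> H; elim: r => [|x r IH] //; rewrite in_cons big_cons => /orP [/eqP->|Hi].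
- have := ss_ge0 _ r F H; lra.
- have := IH Hi; have := H x; lra.
Qed.

Lemma ss_bound (T : Type) (r : seq T) (F : T -> R) B :
  (forall i, F i <= B) -> \big[Rplus/0]_(i <- r) F i <= INR (size r) * B.
Proof.
move=> H; elim: r => [|x r IH]; first by rewrite big_nil /=; lra.
rewrite big_cons; change (size (x :: r)) with (S (size r)); rewrite S_INR; have := H x; lra.
Qed.

Lemma ss_mink (T : Type) (r : seq T) (u v : T -> R) :
  sqrt (\big[Rplus/0]_(i <- r) Rsqr (u i + v i)) <=
  sqrt (\big[Rplus/0]_(i <- r) Rsqr (u i)) + sqrt (\big[Rplus/0]_(i <- r) Rsqr (v i)).
Proof.
elim: r => [|x r IH]; first by rewrite !big_nil sqrt_0; lra.
rewrite !big_cons.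
set U := \big[Rplus/0]_(i <- r) Rsqr (u i).
set V := \big[Rplus/0]_(i <- r) Rsqr (v i).
set W := \big[Rplus/0]_(i <- r) Rsqr (u i + v i).
have U0 : 0 <= U by apply: ss_ge0 => i; apply: Rle_0_sqr.
have V0 : 0 <= V by apply: ss_ge0 => i; apply: Rle_0_sqr.
have W0 : 0 <= W by apply: ss_ge0 => i; apply: Rle_0_sqr.
have sU := sqrt_pos U. have sV := sqrt_pos V.
have h1 : sqrt (Rsqr (u x + v x) + W) <= sqrt (Rsqr (u x + v x) + Rsqr (sqrt U + sqrt V)).
  apply: sqrt_le_1_alt.
  have : Rsqr (sqrt W) <= Rsqr (sqrt U + sqrt V).
    apply: Rsqr_incr_1 => //; [exact: sqrt_pos| lra].
  rewrite Rsqr_sqrt //; lra.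
have h2 := triangle (u x) (sqrt U) (-(v x)) (- sqrt V) 0 0.
rewrite /dist_euc in h2.
have e1 : Rsqr (u x - 0) + Rsqr (sqrt U - 0) = Rsqr (u x) + U.
  rewrite !Rminus_0_r Rsqr_sqrt //.
have e2 : Rsqr (0 - - v x) + Rsqr (0 - - sqrt V) = Rsqr (v x) + V.
  rewrite !Rminus_0_l !Ropp_involutive Rsqr_sqrt //.
have e3 : Rsqr (u x - - v x) + Rsqr (sqrt U - - sqrt V) = Rsqr (u x + v x) + Rsqr (sqrt U + sqrt V).
  unfold Rsqr; ring.
rewrite e1 e2 e3 in h2; lra.
Qed.
Lemma size_ie n : size (index_enum 'I_n) = n.
Proof. have := deprecated_filter_index_enum (T:='I_n) predT. rewrite filter_predT => ->. exact: size_enum_ord. Qed.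

Definition nrm {d : nat} (u : 'I_d -> R) : R := sqrt (\big[Rplus/0]_(i < d) Rsqr (u i)).

Lemma nrm_ge0 {d} (u : 'I_d -> R) : 0 <= nrm u.
Proof. exact: sqrt_pos. Qed.

Lemma nrm_ext {d} (u v : 'I_d -> R) : (forall i, u i = v i) -> nrm u = nrm v.
Proof. move=> H; rewrite /nrm (eq_bigr (fun i => Rsqr (v i))) // => i _; by rewrite H. Qed.

Lemma nrm_coord {d} (u : 'I_d -> R) i : Rabs (u i) <= nrm u.
Proof.
rewrite -sqrt_Rsqr_abs; apply: sqrt_le_1_alt.
apply: (ss_term _ _ (fun i => Rsqr (u i))); last exact: mem_index_enum.
move=> j; exact: Rle_0_sqr.
Qed.

Lemma nrm_bound {d} (u : 'I_d -> R) B : 0 <= B -> (forall i, Rabs (u i) <= B) -> nrm u <= INR d * B.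
Proof.
move=> B0 H.
have h : \big[Rplus/0]_(i < d) Rsqr (u i) <= INR d * Rsqr B.
  have := ss_bound _ (index_enum 'I_d) (fun i => Rsqr (u i)) (Rsqr B).
  rewrite size_ie; apply => i. rewrite Rsqr_abs. apply: Rsqr_incr_1; [exact: H|exact: Rabs_pos|exact: B0].
rewrite /nrm -(sqrt_Rsqr (INR d * B)); last by apply: Rmult_le_pos => //; exact: pos_INR.
apply: sqrt_le_1_alt. apply: (Rle_trans _ _ _ h).
rewrite Rsqr_mult. apply: Rmult_le_compat_r; first exact: Rle_0_sqr.
case: d u H h => [|d] u H h; first by rewrite /= /Rsqr; lra.
have := pos_INR d; rewrite S_INR /Rsqr => h0; nra.
Qed.

Lemma nrm_scale {d} (u : 'I_d -> R) c : nrm (fun i => c * u i) = Rabs c * nrm u.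
Proof.
rewrite /nrm (eq_bigr (fun i => Rsqr c * Rsqr (u i))); last by move=> i _; rewrite Rsqr_mult.
rewrite ss_scale sqrt_mult; [|exact: Rle_0_sqr|apply: ss_ge0 => i; exact: Rle_0_sqr].
by rewrite sqrt_Rsqr_abs.
Qed.

Lemma nrm_add {d} (u v : 'I_d -> R) : nrm (fun i => u i + v i) <= nrm u + nrm v.
Proof. exact: ss_mink. Qed.

Lemma edist_nrm {d} (x y : pt d) : edist x y = nrm (fun i => x i - y i).
Proof. by []. Qed.

Lemma edist_sym {d} (x y : pt d) : edist x y = edist y x.
Proof.
rewrite !edist_nrm (nrm_ext (fun i => x i - y i) (fun i => (-1) * (y i - x i))); last by move=> i; ring.
rewrite nrm_scale Rabs_Ropp Rabs_R1; ring.
Qed.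

Lemma edist_tri {d} (x y z : pt d) : edist x z <= edist x y + edist y z.
Proof.
rewrite !edist_nrm (nrm_ext (fun i => x i - z i) (fun i => (x i - y i) + (y i - z i))); last by move=> i; ring.
exact: nrm_add.
Qed.

Lemma Rsup_eq (E : R -> Prop) m : is_lub E m -> Rsup E = m.
Proof.
move=> H. have [H1 H2] : is_lub E (Rsup E) by rewrite /Rsup; apply: epsilon_spec; exists m.
case: H => H3 H4. apply: Rle_antisym; [exact: H2|exact: H4].
Qed.

Lemma seg_conv {d} (a b x y : pt d) l : seg a b x -> seg a b y -> 0 <= l <= 1 ->
  seg a b (fun i => l * x i + (1 - l) * y i).
Proof.
move=> [t [Ht Hx]] [s [Hs Hy]] Hl. exists (l * t + (1 - l) * s); split; first nra.
move=> i; rewrite Hx Hy; ring.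
Qed.

Lemma seg_a {d} (a b : pt d) : seg a b a.
Proof. exists 0; split; [lra|move=> i; ring]. Qed.
Lemma seg_b {d} (a b : pt d) : seg a b b.
Proof. exists 1; split; [lra|move=> i; ring]. Qed.

Lemma seg_dist {d} (a b p q : pt d) : seg a b p -> seg a b q -> edist p q <= edist a b.
Proof.
move=> [t [Ht Hp]] [s [Hs Hq]].
rewrite !edist_nrm (nrm_ext (fun i => p i - q i) (fun i => (s - t) * (a i - b i))); last by move=> i; rewrite Hp Hq; ring.
rewrite nrm_scale. have := nrm_ge0 (fun i => a i - b i).
have : Rabs (s - t) <= 1 by apply: Rabs_le; lra.
move=> h1 h2. have := Rmult_le_compat_r _ _ _ h2 h1. lra.
Qed.

Lemma diam_seg {d} (S : pt d -> Prop) a b : (forall p, S p <-> seg a b p) -> diam S = edist a b.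
Proof.
move=> HS; apply: Rsup_eq; split.
- move=> x [p [q [Hp [Hq ->]]]]; apply: seg_dist; by apply/HS.
- move=> m Hm; apply: Hm; exists a, b; split; [apply/HS; exact: seg_a|split; [apply/HS; exact: seg_b|done]].
Qed.

Lemma ss_zero (T : Type) (r : seq T) : \big[Rplus/0]_(i <- r) (0:R) = 0.
Proof. elim: r => [|y r IH]; first by rewrite big_nil. rewrite big_cons IH; ring. Qed.

Lemma ss_single (T : eqType) (r : seq T) (i0 : T) v :
  uniq r -> i0 \in r -> \big[Rplus/0]_(i <- r) (if i == i0 then v else 0) = v.
Proof.
elim: r => [|x r IH] //= /andP [nx ur]; rewrite in_cons big_cons.
case: (eqVneq x i0) => [E0|ne] /=.
- subst x => _. rewrite (eq_big_seq (fun _ => 0)); last first.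
    move=> i ir; case: (eqVneq i i0) => // E; by subst; rewrite ir in nx.
  rewrite ss_zero; ring.
- move=> H; rewrite IH //; ring.
Qed.

Lemma diam_ball_ge {d} (i0 : 'I_d) (c : pt d) r : 0 < r -> r <= diam (closed_ball c r).
Proof.
move=> r0.
set E := (fun x => exists p q, closed_ball c r p /\ closed_ball c r q /\ x = edist p q).
have hb : bound E.
  exists (2 * r) => x [p [q [Hp [Hq ->]]]]. rewrite /closed_ball in Hp Hq.
  have := edist_tri p c q; rewrite (edist_sym c q); lra.
set e := (fun i : 'I_d => if i == i0 then c i + r else c i).
have he : edist e c = r.
  rewrite edist_nrm /nrm (eq_bigr (fun i => if i == i0 then Rsqr r else 0)).
    rewrite ss_single; [apply: sqrt_Rsqr; lra|exact: index_enum_uniq|exact: mem_index_enum].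
  move=> i _; rewrite /e; case: (i == i0); [congr Rsqr; ring|rewrite Rminus_diag; exact: Rsqr_0].
have hc : edist c c = 0.
  rewrite edist_nrm /nrm (eq_bigr (fun i => if i == i0 then 0 else 0)).
    rewrite ss_single; [exact: sqrt_0|exact: index_enum_uniq|exact: mem_index_enum].
  move=> i _; rewrite Rminus_diag Rsqr_0; by case: (i == i0).
have hE : E r.
  exists e, c. split; [rewrite /closed_ball he; lra|split; [rewrite /closed_ball hc; lra|by rewrite he]].
have [m Hm] := completeness E hb (ex_intro _ r hE).
rewrite /diam -/E (Rsup_eq E m Hm). by apply Hm.
Qed.

Lemma div_le1 a b : 0 < b -> a <= b -> a / b <= 1.
Proof. move=> b0 ab; apply (Rmult_le_reg_r b) => //. rewrite /Rdiv Rmult_assoc Rinv_l; lra. Qed.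

Definition fl (x : R) : Z := (up x - 1)%Z.

Lemma fl_spec x : IZR (fl x) <= x < IZR (fl x) + 1.
Proof. rewrite /fl minus_IZR /=; have [h1 h2] := archimed x; lra. Qed.

Lemma fl_same x y : fl x = fl y -> Rabs (x - y) < 1.
Proof. move=> E; have := fl_spec x; have := fl_spec y; rewrite E => h1 h2; apply: Rabs_def1; lra. Qed.

Lemma close_pt {d} (c : pt d) r h (xi xj pi : pt d) Ni Nj :
  0 < h -> 0 < Nj <= Ni -> edist pi c <= r ->
  (forall k, fl ((xj k - c k) / (Nj * h)) = fl ((xi k - c k) / (Ni * h))) ->
  edist xj (fun k => (Nj / Ni) * xi k + (1 - Nj / Ni) * pi k) <= INR d * (Nj * h) + (1 - Nj / Ni) * r.
Proof.
move=> h0 [Nj0 NjNi] Hp Hk.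
have Ni0 : 0 < Ni by lra.
have l1 : Nj / Ni <= 1 by apply: div_le1 => //; lra.
rewrite edist_nrm.
rewrite (nrm_ext _ (fun k => (Nj * h * ((xj k - c k) / (Nj * h) - (xi k - c k) / (Ni * h))) + (- (1 - Nj / Ni) * (pi k - c k)))); last first.
  move=> k; field; lra.
apply: Rle_trans; first exact: nrm_add.
apply: Rplus_le_compat.
- apply: nrm_bound; first by apply: Rmult_le_pos; lra.
  move=> k; rewrite Rabs_mult (Rabs_right (Nj * h)); last by apply: Rle_ge; apply: Rmult_le_pos; lra.
  have := fl_same _ _ (Hk k). have : 0 <= Nj * h by apply: Rmult_le_pos; lra. nra.
- rewrite nrm_scale -edist_nrm Rabs_Ropp Rabs_right; last lra.
  apply: Rmult_le_compat_l => //; lra.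
Qed.

Lemma shadow_core {d} (c : pt d) r h (ai bi pi aj bj : pt d) Ni Nj :
  0 < h -> 0 < Nj <= Ni -> seg ai bi pi -> edist pi c <= r ->
  (forall k, fl ((aj k - c k) / (Nj * h)) = fl ((ai k - c k) / (Ni * h))) ->
  (forall k, fl ((bj k - c k) / (Nj * h)) = fl ((bi k - c k) / (Ni * h))) ->
  forall q, seg aj bj q -> exists p, seg ai bi p /\ edist q p <= INR d * (Nj * h) + (1 - Nj / Ni) * r.
Proof.
move=> h0 NN Hpi Hp Ha Hb q [t [Ht Hq]].
have l1 : 0 <= Nj / Ni <= 1 by split; [apply: Rle_mult_inv_pos; lra|apply: div_le1; lra].
set ya := (fun k => (Nj / Ni) * ai k + (1 - Nj / Ni) * pi k).
set yb := (fun k => (Nj / Ni) * bi k + (1 - Nj / Ni) * pi k).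
have Ea := close_pt c r h ai aj pi Ni Nj h0 NN Hp Ha.
have Eb := close_pt c r h bi bj pi Ni Nj h0 NN Hp Hb.
have Sa : seg ai bi ya by apply: seg_conv => //; exact: seg_a.
have Sb : seg ai bi yb by apply: seg_conv => //; exact: seg_b.
exists (fun k => (1 - t) * ya k + (1 - (1 - t)) * yb k); split; first by apply: seg_conv => //; lra.
rewrite edist_nrm (nrm_ext _ (fun k => (1 - t) * (aj k - ya k) + t * (bj k - yb k))); last first.
  by move=> k; rewrite Hq; ring.
apply: Rle_trans; first exact: nrm_add.
rewrite !nrm_scale -!edist_nrm !Rabs_right; try lra.
change (edist aj ya <= INR d * (Nj * h) + (1 - Nj / Ni) * r) in Ea.
change (edist bj yb <= INR d * (Nj * h) + (1 - Nj / Ni) * r) in Eb.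
set e := INR d * (Nj * h) + (1 - Nj / Ni) * r in Ea Eb *.
have : (1 - t) * edist aj ya <= (1 - t) * e by apply: Rmult_le_compat_l; lra.
have : t * edist bj yb <= t * e by apply: Rmult_le_compat_l; lra.
lra.
Qed.

Definition hh (d : nat) (sigma : R) : R := sigma / (4 * INR d).
Definition Mb (sigma : R) : Z := up (4 / sigma).

Definition mm (r l : R) : Z := fl (l / r).

Definition NN {d} (r sigma : R) (a b : pt d) : R :=
  if Z.ltb (mm r (edist a b)) (Mb sigma) then r * (IZR (mm r (edist a b)) + 1) else edist a b.

Definition tag {d} (r sigma : R) (a b : pt d) : Z :=
  if Z.ltb (mm r (edist a b)) (Mb sigma) then mm r (edist a b) else Mb sigma.

Definition cells {d} (c : pt d) (Nh : R) (x : pt d) : list Z :=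
  List.map (fun k => fl ((x k - c k) / Nh)) (enum 'I_d).

Definition sig {d} (c : pt d) (r sigma : R) (a b : pt d) : Z * list Z * list Z :=
  (tag r sigma a b, cells c (NN r sigma a b * hh d sigma) a, cells c (NN r sigma a b * hh d sigma) b).

Lemma In_enum {d} (k : 'I_d) : List.In k (enum 'I_d).
Proof.
have : k \in enum 'I_d by rewrite mem_enum.
elim: (enum 'I_d) => [|x s IH]; first by rewrite in_nil.
rewrite in_cons => /orP [/eqP ->|H]; [by left|right; exact: IH].
Qed.

Lemma map_eq_pt (A B : Type) (f g : A -> B) (l : list A) k :
  List.map f l = List.map g l -> List.In k l -> f k = g k.
Proof.
elim: l => [|x l IH] //= [E1 E2] [<-|H] //; exact: IH.
Qed.

Lemma cells_eq {d} (c : pt d) N1 N2 (x y : pt d) :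
  cells c N1 x = cells c N2 y -> forall k, fl ((x k - c k) / N1) = fl ((y k - c k) / N2).
Proof.
move=> E k; apply: (map_eq_pt _ _ (fun k => fl ((x k - c k) / N1)) (fun k => fl ((y k - c k) / N2)) (enum 'I_d)) => //.
exact: In_enum.
Qed.

Lemma mm_spec r l : 0 < r -> r <= l -> (1 <= mm r l)%Z /\ r * IZR (mm r l) <= l < r * (IZR (mm r l) + 1).
Proof.
move=> r0 rl. have [h1 h2] := fl_spec (l / r).
have e : l / r * r = l by field; lra.
have q1 : 1 <= l / r by apply (Rmult_le_reg_r r) => //; lra.
split.
- apply: le_IZR. rewrite /mm. have : 0 < IZR (fl (l / r)) by lra.
  move=> /lt_IZR H. apply: IZR_le; lia.
- split.
  + have := Rmult_le_compat_r r _ _ (Rlt_le _ _ r0) h1. rewrite /mm; lra.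
  + have := Rmult_lt_compat_r r _ _ r0 h2. rewrite /mm; lra.
Qed.

Definition shad {d} sigma (ai bi aj bj : pt d) : Prop :=
  forall q, seg aj bj q -> exists p, seg ai bi p /\ edist q p <= sigma * edist aj bj.

Lemma hh_pos d sigma : (1 <= d)%coq_nat -> 0 < sigma -> 0 < hh d sigma.
Proof.
move=> Hd s0; rewrite /hh. have : 0 < INR d by apply: lt_0_INR; lia.
move=> H; apply: Rdiv_lt_0_compat => //; lra.
Qed.

Lemma dh d sigma X : (1 <= d)%coq_nat -> INR d * (X * hh d sigma) = X * sigma / 4.
Proof.
move=> Hd. have : 0 < INR d by apply: lt_0_INR; lia.
move=> H; rewrite /hh; field; lra.
Qed.

Lemma large_case {d} (c : pt d) r sigma (ai bi pi aj bj : pt d) :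
  (1 <= d)%coq_nat -> 0 < sigma -> 0 < r ->
  seg ai bi pi -> edist pi c <= r -> r <= edist aj bj ->
  (Mb sigma <= mm r (edist aj bj))%Z ->
  edist aj bj <= edist ai bi ->
  cells c (edist aj bj * hh d sigma) aj = cells c (edist ai bi * hh d sigma) ai ->
  cells c (edist aj bj * hh d sigma) bj = cells c (edist ai bi * hh d sigma) bi ->
  shad sigma ai bi aj bj.
Proof.
move=> Hd s0 r0 Hpi Hp rl Hm Hl Ca Cb q Hq.
have [p [Sp Ep]] := shadow_core c r (hh d sigma) ai bi pi aj bj (edist ai bi) (edist aj bj)
  (hh_pos d sigma Hd s0) (conj (Rlt_le_trans _ _ _ r0 rl) Hl) Hpi Hp (cells_eq _ _ _ _ _ Ca) (cells_eq _ _ _ _ _ Cb) q Hq.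
exists p; split => //. rewrite dh // in Ep.
have [_ [m1 _]] := mm_spec r (edist aj bj) r0 rl.
have M : 4 / sigma < IZR (Mb sigma) by rewrite /Mb; have := archimed (4 / sigma); lra.
have M2 : IZR (Mb sigma) <= IZR (mm r (edist aj bj)) by apply: IZR_le.
have rs : r * 4 <= sigma * edist aj bj.
  have : r * (4 / sigma) <= edist aj bj.
    apply: Rle_trans; last exact: m1. apply: Rmult_le_compat_l; lra.
  move=> H. have : r * (4 / sigma) * sigma <= edist aj bj * sigma by apply: Rmult_le_compat_r; lra.
  have -> : r * (4 / sigma) * sigma = r * 4 by field; lra. lra.
have l0 : 0 <= edist aj bj / edist ai bi by apply: Rle_mult_inv_pos; [exact: sqrt_pos|lra].
have : (1 - edist aj bj / edist ai bi) * r <= r by nra.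
lra.
Qed.

Lemma small_case {d} (c : pt d) r sigma (ai bi pi aj bj : pt d) N :
  (1 <= d)%coq_nat -> 0 < sigma -> 0 < r ->
  seg ai bi pi -> edist pi c <= r -> 0 < N -> N <= 2 * edist aj bj ->
  cells c (N * hh d sigma) aj = cells c (N * hh d sigma) ai ->
  cells c (N * hh d sigma) bj = cells c (N * hh d sigma) bi ->
  shad sigma ai bi aj bj.
Proof.
move=> Hd s0 r0 Hpi Hp N0 NL Ca Cb q Hq.
have [p [Sp Ep]] := shadow_core c r (hh d sigma) ai bi pi aj bj N N
  (hh_pos d sigma Hd s0) (conj N0 (Rle_refl N)) Hpi Hp (cells_eq _ _ _ _ _ Ca) (cells_eq _ _ _ _ _ Cb) q Hq.
exists p; split => //. rewrite dh // in Ep.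
replace (N / N) with 1 in Ep by (field; lra).
have : N * sigma <= 2 * edist aj bj * sigma by apply: Rmult_le_compat_r; lra.
have := sqrt_pos (\big[Rplus/0]_(i < d) Rsqr (aj i - bj i)). rewrite -/(edist aj bj).
nra.
Qed.

Lemma sig_shadow {d} (c : pt d) r sigma (ai bi pi aj bj pj : pt d) :
  (1 <= d)%coq_nat -> 0 < sigma -> 0 < r ->
  seg ai bi pi -> edist pi c <= r -> r <= edist ai bi ->
  seg aj bj pj -> edist pj c <= r -> r <= edist aj bj ->
  sig c r sigma ai bi = sig c r sigma aj bj ->
  shad sigma ai bi aj bj \/ shad sigma aj bj ai bi.
Proof.
move=> Hd s0 r0 Hpi Hp ri Hpj Hq rj E.
rewrite /sig in E. case: E => Et Ea Eb.
move: Et Ea Eb; rewrite /tag /NN.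
have [mi1 [mi2 mi3]] := mm_spec r _ r0 ri.
have [mj1 [mj2 mj3]] := mm_spec r _ r0 rj.
case: (Z.ltb_spec (mm r (edist ai bi)) (Mb sigma)) => Hi;
case: (Z.ltb_spec (mm r (edist aj bj)) (Mb sigma)) => Hj Et Ea Eb; try lia.
- left. rewrite Et in Ea Eb. apply: (small_case c r sigma ai bi pi aj bj (r * (IZR (mm r (edist aj bj)) + 1))) => //.
  + have : 1 <= IZR (mm r (edist aj bj)) by apply: IZR_le. nra.
  + lra.
- case: (Rle_dec (edist aj bj) (edist ai bi)) => H.
  + left; apply: (large_case c r sigma ai bi pi aj bj) => //.
  + right; apply: (large_case c r sigma aj bj pj ai bi) => //; lra.
Qed.

Fixpoint vecs (n : nat) (R0 : list Z) : list (list Z) :=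
  match n with
  | O => [:: nil]
  | S n => List.map (fun p => fst p :: snd p) (list_prod R0 (vecs n R0))
  end.

Lemma vecs_len n R0 : List.length (vecs n R0) = Nat.pow (List.length R0) n.
Proof.
elim: n => [|n IH] //=. rewrite List.length_map length_prod IH. by [].
Qed.

Lemma in_vecs n R0 l : List.length l = n -> (forall z, List.In z l -> List.In z R0) -> List.In l (vecs n R0).
Proof.
elim: n l => [|n IH] [|z l] //=; first by left.
move=> [E] H. apply/in_map_iff. exists (z, l); split => //. apply/in_prod.
- apply: H; by left.
- apply: IH => // y Hy; apply: H; by right.
Qed.

Definition Kz d sigma : Z := up (8 * INR d / sigma).
Definition rng d sigma : list Z :=
  List.map (fun n => (Z.of_nat n - Kz d sigma)%Z) (List.seq 0 (Nat.add (Nat.mul 2 (Z.to_nat (Kz d sigma))) 1)).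
Definition tags sigma : list Z := List.map Z.of_nat (List.seq 1 (Z.to_nat (Mb sigma))).
Definition allsigs d sigma := list_prod (list_prod (tags sigma) (vecs d (rng d sigma))) (vecs d (rng d sigma)).

Lemma in_rng d sigma z : (- Kz d sigma <= z <= Kz d sigma)%Z -> List.In z (rng d sigma).
Proof.
move=> H. apply/in_map_iff. exists (Z.to_nat (z + Kz d sigma)). split; first lia.
apply/in_seq; lia.
Qed.

Lemma in_tags sigma z : (1 <= z <= Mb sigma)%Z -> List.In z (tags sigma).
Proof.
move=> H. apply/in_map_iff. exists (Z.to_nat z). split; first lia.
apply/in_seq; lia.
Qed.

Lemma length_enum d : List.length (enum 'I_d) = d.
Proof.
rewrite -[RHS](size_enum_ord d). by elim: (enum 'I_d) => //= x s ->.
Qed.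

Lemma cells_in {d} (c x : pt d) N sigma l :
  (1 <= d)%coq_nat -> 0 < sigma -> 0 < l -> l <= N -> edist x c <= 2 * l ->
  forall z, List.In z (cells c (N * hh d sigma) x) -> List.In z (rng d sigma).
Proof.
move=> Hd s0 l0 lN Hx z /in_map_iff [k [<- _]]. apply: in_rng.
have h0 := hh_pos d sigma Hd s0.
have dpos : 0 < INR d by apply: lt_0_INR; lia.
set y := (x k - c k) / (N * hh d sigma).
have Nh : 0 < N * hh d sigma by apply: Rmult_lt_0_compat; lra.
have Hy : Rabs y <= 8 * INR d / sigma.
  have hk : Rabs (x k - c k) <= 2 * l by apply: Rle_trans; [exact: (nrm_coord (fun i => x i - c i) k)|exact: Hx].
  have Ey : Rabs y = Rabs (x k - c k) * / (N * hh d sigma).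
    rewrite /y /Rdiv Rabs_mult Rabs_inv (Rabs_right (N * _)) //; lra.
  have e : 8 * INR d / sigma = (2 * N) * / (N * hh d sigma) by rewrite /hh; field; lra.
  rewrite Ey e. apply: Rmult_le_compat_r; first by apply: Rlt_le; apply: Rinv_0_lt_compat.
  lra.
have [k1 k2] := archimed (8 * INR d / sigma). rewrite -/(Kz d sigma) in k1 k2.
have [f1 f2] := fl_spec y.
have a2 : y <= 8 * INR d / sigma by have := Rle_abs y; lra.
have a1 : - (8 * INR d / sigma) <= y by have := Rle_abs (- y); rewrite Rabs_Ropp; lra.
split.
- have H2 : (- Kz d sigma - 1 < fl y)%Z by apply: lt_IZR; rewrite minus_IZR opp_IZR; lra.
  lia.
- apply: le_IZR; lra.
Qed.

Lemma sig_in {d} (c : pt d) r sigma (a b p : pt d) :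
  (1 <= d)%coq_nat -> 0 < sigma -> 0 < r ->
  seg a b p -> edist p c <= r -> r <= edist a b ->
  List.In (sig c r sigma a b) (allsigs d sigma).
Proof.
move=> Hd s0 r0 Hp Hpc rl.
have [m1 [m2 m3]] := mm_spec r _ r0 rl.
have Mpos : (1 <= Mb sigma)%Z.
  have q : 0 < 4 / sigma by apply: Rdiv_lt_0_compat; lra.
  have [q1 q2] := archimed (4 / sigma).
  have : (0 < Mb sigma)%Z by apply: lt_IZR; rewrite /Mb; lra.
  lia.
have hN : edist a b <= NN r sigma a b.
  rewrite /NN; case: (Z.ltb _ _); lra.
have l0 : 0 < edist a b by lra.
have hx : forall x, seg a b x -> edist x c <= 2 * edist a b.
  move=> x Hx. have := edist_tri x p c. have := seg_dist a b x p Hx Hp. lra.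
rewrite /sig; apply: in_prod; first apply: in_prod.
- apply: in_tags. rewrite /tag. case: (Z.ltb_spec (mm r (edist a b)) (Mb sigma)); lia.
- apply: in_vecs; first by rewrite List.length_map length_enum.
  apply: (cells_in c a _ sigma (edist a b)) => //. apply: hx; exact: seg_a.
- apply: in_vecs; first by rewrite List.length_map length_enum.
  apply: (cells_in c b _ sigma (edist a b)) => //. apply: hx; exact: seg_b.
Qed.

Lemma NoDup_map_in (A B : Type) (f : A -> B) (l : list A) :
  NoDup l -> (forall x y, List.In x l -> List.In y l -> f x = f y -> x = y) -> NoDup (List.map f l).
Proof.
elim: l => [|x l IH] /=; first by constructor.
move=> ND H; inversion ND; subst. constructor.
- move=> /in_map_iff [y [E Hy]]. have := H y x (or_intror Hy) (or_introl erefl) E. move=> Exy; subst; done.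
- apply: IH => // u v Hu Hv; apply: H; by right.
Qed.

Lemma allsigs_len d sigma :
  List.length (allsigs d sigma) =
  Nat.mul (Nat.mul (Z.to_nat (Mb sigma)) (Nat.pow (Nat.add (Nat.mul 2 (Z.to_nat (Kz d sigma))) 1) d))
          (Nat.pow (Nat.add (Nat.mul 2 (Z.to_nat (Kz d sigma))) 1) d).
Proof.
rewrite /allsigs !length_prod !vecs_len /rng /tags !List.length_map !length_seq. by [].
Qed.

Definition ends {d} (S : pt d -> Prop) : pt d * pt d :=
  epsilon (inhabits ((fun _ => 0), (fun _ => 0))) (fun ab => forall p, S p <-> seg ab.1 ab.2 p).

Lemma ends_spec {d} (S : pt d -> Prop) : is_segment S -> forall p, S p <-> seg (ends S).1 (ends S).2 p.
Proof.
move=> [a [b [_ H]]]. rewrite /ends. apply: (epsilon_spec (inhabits ((fun _ => 0), (fun _ => 0)))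
  (fun ab => forall p, S p <-> seg ab.1 ab.2 p)). by exists (a, b).
Qed.

Lemma count_bound d sigma K M : (1 <= d)%coq_nat -> 0 < sigma < 1 ->
  IZR M <= 4 / sigma + 1 -> IZR K <= 8 * INR d / sigma + 1 -> (0 <= K)%Z -> (0 <= M)%Z ->
  INR (Nat.mul (Nat.mul (Z.to_nat M) (Nat.pow (Nat.add (Nat.mul 2 (Z.to_nat K)) 1) d))
          (Nat.pow (Nat.add (Nat.mul 2 (Z.to_nat K)) 1) d))
  <= 5 * (19 * INR d) ^ (Nat.mul 2 d) * Rpower sigma (- (2 * INR d + 2)).
Proof.
move=> Hd [s0 s1] HM HK K0 M0.
have dpos : 1 <= INR d by apply: (le_INR 1); lia.
set u := / sigma.
have u1 : 1 <= u by rewrite /u -Rinv_1; apply: Rinv_le_contravar; lra.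
have eR : Rpower sigma (- (2 * INR d + 2)) = u ^ (Nat.add (Nat.mul 2 d) 2).
  rewrite Rpower_Ropp /u pow_inv. congr Rinv.
  rewrite -Rpower_pow //. congr Rpower. rewrite plus_INR mult_INR /=. ring.
rewrite eR !mult_INR !pow_INR.
have eM : INR (Z.to_nat M) = IZR M by rewrite INR_IZR_INZ Z2Nat.id.
have eQ : INR (Nat.add (Nat.mul 2 (Z.to_nat K)) 1) = 2 * IZR K + 1.
  rewrite plus_INR mult_INR (INR_IZR_INZ (Z.to_nat K)) Z2Nat.id //.
rewrite eM eQ.
have hM : IZR M <= 5 * u by rewrite /u; have : 1 <= / sigma by []; lra.
have hQ : 2 * IZR K + 1 <= 19 * INR d * u.
  have : 8 * INR d / sigma = 8 * INR d * u by rewrite /u.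
  have : INR d <= INR d * u by nra. nra.
have Q0 : 0 <= 2 * IZR K + 1 by have := IZR_le _ _ K0; lra.
have hQd : (2 * IZR K + 1) ^ d <= (19 * INR d * u) ^ d by apply: pow_incr; lra.
have M0' : 0 <= IZR M by apply: IZR_le.
have P0 : 0 <= (2 * IZR K + 1) ^ d by apply: pow_le.
have step : IZR M * (2 * IZR K + 1) ^ d * (2 * IZR K + 1) ^ d <= 5 * u * (19 * INR d * u) ^ d * (19 * INR d * u) ^ d.
  apply: Rmult_le_compat; try (apply: Rmult_le_pos; lra); try lra.
  apply: Rmult_le_compat; lra.
apply: (Rle_trans _ _ _ step).
set A := 19 * INR d.
rewrite Rpow_mult_distr.
have eA : A ^ (Nat.mul 2 d) = A ^ d * A ^ d by rewrite -pow_add; congr pow; lia.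
have eU : u ^ (Nat.add (Nat.mul 2 d) 2) = u ^ d * u ^ d * (u * u) by rewrite pow_add (_ : Nat.mul 2 d = Nat.add d d); [rewrite pow_add /=; ring|lia].
rewrite eA eU.
have a0 : 0 <= A ^ d by apply: pow_le; rewrite /A; lra.
have b1 : 1 <= u ^ d by apply: pow_R1_Rle.
have c1 : u <= u * u by nra.
set X := A ^ d in a0 *. set B := u ^ d in b1 *.
have h1 : 0 <= X * B by apply: Rmult_le_pos; lra.
have h2 : 0 <= 5 * (X * B) * (X * B) by apply: Rmult_le_pos; [apply: Rmult_le_pos|]; lra.
have : 5 * (X * B) * (X * B) * u <= 5 * (X * B) * (X * B) * (u * u) by apply: Rmult_le_compat_l.
nra.
Qed.

Theorem mainTheorem8 :
  forall d : nat, (1 <= d)%coq_nat ->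
  exists C : R,
    forall sigma : R, 0 < sigma < 1 ->
    forall L : list (pt d -> Prop),
      (forall S, In S L -> is_segment S) ->
      exposed sigma L ->
      density_le L (C * Rpower sigma (- (2 * INR d + 2))).
Proof.
move=> d Hd. exists (5 * (19 * INR d) ^ (Nat.mul 2 d)).
move=> sigma Hs L Hseg Hexp c r r0 I ND HI.
have s0 : 0 < sigma by lra.
have i0 : 'I_d by exists 0%N; apply/ltP; lia.
set Sn := fun i => List.nth i L (fun _ => False).
have facts : forall i, In i I ->
  (forall p, Sn i p <-> seg (ends (Sn i)).1 (ends (Sn i)).2 p) /\
  exists p, seg (ends (Sn i)).1 (ends (Sn i)).2 p /\ edist p c <= r /\
    r <= edist (ends (Sn i)).1 (ends (Sn i)).2.
  move=> i Hi. have [Hl [[p [Hp Hb]] Hdm]] := HI i Hi.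
  have Hs' : is_segment (Sn i) by apply: Hseg; apply: nth_In.
  have E := ends_spec _ Hs'.
  split => //. exists p; split; first by apply/E.
  split => //. rewrite -(diam_seg _ _ _ E). apply: Rle_trans; last exact: Hdm.
  exact: diam_ball_ge.
set f := fun i => sig c r sigma (ends (Sn i)).1 (ends (Sn i)).2.
have inj : forall i j, In i I -> In j I -> f i = f j -> i = j.
  move=> i j Hi Hj E. case: (Nat.eq_dec i j) => // Nij; exfalso.
  have [Ei [pi [Spi [Pi Ri]]]] := facts i Hi.
  have [Ej [pj [Spj [Pj Rj]]]] := facts j Hj.
  have [Li _] := HI i Hi. have [Lj _] := HI j Hj.
  have tosh : forall a b, In a I -> In b I -> shad sigma (ends (Sn a)).1 (ends (Sn a)).2 (ends (Sn b)).1 (ends (Sn b)).2 -> shadows sigma (Sn a) (Sn b).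
    move=> a b Ha Hb H q Hq.
    have [Ea _] := facts a Ha. have [Eb _] := facts b Hb.
    have [p [Sp Ep]] := H q (proj1 (Eb q) Hq).
    exists p; split; first by apply/Ea.
    by rewrite (diam_seg _ _ _ Eb).
  case: (sig_shadow c r sigma _ _ pi _ _ pj Hd s0 r0 Spi Pi Ri Spj Pj Rj E) => H.
  - exact: (Hexp i j Li Lj Nij (tosh i j Hi Hj H)).
  - exact: (Hexp j i Lj Li (fun e => Nij (esym e)) (tosh j i Hj Hi H)).
have ND2 : NoDup (List.map f I) by apply: NoDup_map_in.
have inc : incl (List.map f I) (allsigs d sigma).
  move=> z /in_map_iff [i [<- Hi]]. have [_ [p [Sp [Pc Rl]]]] := facts i Hi.
  exact: (sig_in c r sigma _ _ p).
have len := NoDup_incl_length ND2 inc.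
rewrite List.length_map allsigs_len in len.
apply: Rle_trans; first by apply: le_INR; exact: len.
apply: count_bound => //.
- rewrite /Mb; have := archimed (4 / sigma); lra.
- rewrite /Kz; have := archimed (8 * INR d / sigma); lra.
- have : 0 < 8 * INR d / sigma by apply: Rdiv_lt_0_compat; [have : 0 < INR d by apply: lt_0_INR; lia|]; lra.
  have [k1 _] := archimed (8 * INR d / sigma).
  move=> H; apply: le_IZR; rewrite /Kz; lra.
- have : 0 < 4 / sigma by apply: Rdiv_lt_0_compat; lra.
  have [k1 _] := archimed (4 / sigma).
  move=> H; apply: le_IZR; rewrite /Mb; lra.
Qed.
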